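(* Let $0<p_1\le p_2\le1$ and let $X_1,X_2,Y_1,Y_2$ be independent random variables with $X_1$ geometric with success probability $p_1$, $X_2$ geometric with success probability $p_2$, and $Y_1,Y_2$ geometric with success probability $(p_1+p_2)/2$. Let $Z$ be a random variable taking nonnegative integer values, independent of $X_1,X_2,Y_1,Y_2$. Then for every positive integer $j$, $$\mathbb{P}(Z+X_1+X_2>j)\ge\mathbb{P}(Z+Y_1+Y_2>j).$$
   Context: A random variable $Y$ is geometric with success probability $p$ if $\mathbb{P}(Y=s)=(1-p)^{s-1}p$ for $s=1,2,\dots$. *)

(* Defs.v *)
From Stdlib Require Import Reals.
Open Scope R_scope.

Definition geom_pmf (p : R) (s : nat) : R :=
  match s with
  | O => 0
  | S k => (1 - p) ^ k * p
  end.

(* Law of the sum of two independent nat-valued random variables with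
   pmfs f and g: the discrete convolution  (f * g)(n) = sum_{k=0}^n f k g (n-k). *)
Definition conv (f g : nat -> R) (n : nat) : R :=
  sum_f_R0 (fun k => f k * g (n - k)%nat) n.

Definition is_pmf (q : nat -> R) : Prop :=
  (forall n, 0 <= q n) /\ infinite_sum q 1.

Definition tail_gt (w : nat -> R) (j : nat) : R :=
  1 - sum_f_R0 w j.

(* Main.v *)
Require Import Defs.
From Stdlib Require Import Reals Lra Lia Psatz.
Open Scope R_scope.

Lemma sum_scal_l (A : nat -> R) c N :
  sum_f_R0 (fun i => c * A i) N = c * sum_f_R0 A N.
Proof. induction N; simpl; [ring| rewrite IHN; ring]. Qed.

Lemma sum_plus' (A B : nat -> R) N :
  sum_f_R0 (fun i => A i + B i) N = sum_f_R0 A N + sum_f_R0 B N.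
Proof. induction N; simpl; [ring| rewrite IHN; ring]. Qed.

Lemma sum_shift0 (A : nat -> R) N :
  sum_f_R0 (fun k => (if Nat.eq_dec k 0 then 1 else 0) * A k) N = A 0%nat.
Proof.
  induction N; simpl; [ring|]. rewrite IHN. ring.
Qed.

Lemma tri (F : nat -> nat -> R) j :
  sum_f_R0 (fun n => sum_f_R0 (fun k => F k (n-k)%nat) n) j
  = sum_f_R0 (fun k => sum_f_R0 (fun i => F k i) (j-k)) j.
Proof.
  induction j.
  - simpl. reflexivity.
  - rewrite tech5, IHj, tech5, tech5.
    rewrite Nat.sub_diag.
    replace (sum_f_R0 (fun k => sum_f_R0 (fun i => F k i) (S j - k)) j)
      with (sum_f_R0 (fun k => sum_f_R0 (fun i => F k i) (j - k) + F k (S j - k)%nat) j).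
    2:{ apply sum_eq; intros i Hi. replace (S j - i)%nat with (S (j - i)) by lia.
        rewrite tech5. reflexivity. }
    rewrite sum_plus'. simpl (sum_f_R0 _ 0). ring.
Qed.

Lemma Sconv f g j :
  sum_f_R0 (conv f g) j = sum_f_R0 (fun k => f k * sum_f_R0 g (j-k)) j.
Proof.
  unfold conv.
  assert (H := tri (fun k i => f k * g i) j). cbv beta in H. rewrite H.
  apply sum_eq; intros i Hi. apply sum_scal_l.
Qed.

Lemma Sconv2 q g1 g2 j :
  sum_f_R0 (conv (conv q g1) g2) j
  = sum_f_R0 (fun l => q l * sum_f_R0 (conv g1 g2) (j-l)) j.
Proof.
  rewrite Sconv. unfold conv at 1.
  transitivity (sum_f_R0 (fun n => sum_f_R0 (fun k =>
     (fun k i => q k * (g1 i * sum_f_R0 g2 (j - k - i))) k (n-k)%nat) n) j).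
  { apply sum_eq; intros n Hn. rewrite (Rmult_comm _ (sum_f_R0 g2 (j - n))).
    rewrite <- sum_scal_l. apply sum_eq; intros k Hk. cbv beta.
    replace (j - k - (n - k))%nat with (j - n)%nat by lia. ring. }
  assert (H := tri (fun k i => q k * (g1 i * sum_f_R0 g2 (j - k - i))) j).
  cbv beta in H. rewrite H. apply sum_eq; intros l Hl. rewrite sum_scal_l. f_equal.
  rewrite Sconv. reflexivity.
Qed.

Fixpoint Tseq (a b : R) (m : nat) : R :=
  match m with
  | O => 1
  | S m => a * Tseq a b m + (1 - a) * b ^ m
  end.

Lemma Sgeom p r : sum_f_R0 (geom_pmf p) r = 1 - (1 - p) ^ r.
Proof.
  induction r; simpl; [ring|]. rewrite IHr. ring.
Qed.

Lemma Sconv_geom p1 p2 m :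
  sum_f_R0 (conv (geom_pmf p1) (geom_pmf p2)) m = 1 - Tseq (1 - p1) (1 - p2) m.
Proof.
  induction m.
  - simpl. unfold conv. simpl. ring.
  - rewrite Sconv. rewrite Sconv in IHm.
    rewrite decomp_sum by lia. simpl Init.Nat.pred.
    transitivity (0 + sum_f_R0 (fun k =>
       ((if Nat.eq_dec k 0 then 1 else 0) * (p1 * sum_f_R0 (geom_pmf p2) (m - k)))
       + (1 - p1) * (geom_pmf p1 k * sum_f_R0 (geom_pmf p2) (m - k))) m).
    { f_equal. simpl. ring. apply sum_eq; intros k Hk.
      replace (S m - S k)%nat with (m - k)%nat by lia.
      destruct k; simpl; ring. }
    rewrite sum_plus', sum_shift0, sum_scal_l, IHm. simpl.
    rewrite Nat.sub_0_r, Sgeom. ring.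
Qed.

Lemma F1 a b m : 0 <= a -> 0 <= b -> 0 <= (a - b) * (a ^ m - b ^ m).
Proof.
  intros Ha Hb. destruct (Rle_dec a b).
  - assert (a ^ m <= b ^ m) by (apply pow_incr; lra). nra.
  - assert (b ^ m <= a ^ m) by (apply pow_incr; lra). nra.
Qed.

Lemma F2 a b m : 0 <= a -> 0 <= b -> 2 * ((a + b)/2) ^ m <= a ^ m + b ^ m.
Proof.
  intros Ha Hb. induction m; simpl; [lra|].
  pose proof (F1 a b m Ha Hb).
  assert (0 <= (a+b)/2) by lra. nra.
Qed.

Lemma Tsym a b m : (a - b) * Tseq a b m = (1 - b) * a ^ m - (1 - a) * b ^ m.
Proof.
  induction m; simpl; [ring|]. 
  transitivity (a * ((a - b) * Tseq a b m) + (a - b) * (1 - a) * b ^ m); [ring|].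
  rewrite IHm. ring.
Qed.

Lemma Tmono a b m : 0 <= a <= 1 -> 0 <= b <= 1 ->
  Tseq ((a+b)/2) ((a+b)/2) m <= Tseq a b m.
Proof.
  intros Ha Hb. set (c := (a+b)/2).
  induction m; simpl; [lra|].
  assert (E : a * Tseq a b m + (1 - a) * b ^ m
     = c * Tseq a b m + ((1 - a) * b ^ m + (1 - b) * a ^ m) / 2).
  { pose proof (Tsym a b m). unfold c. lra. }
  rewrite E.
  pose proof (F1 a b m ltac:(lra) ltac:(lra)).
  pose proof (F2 a b m ltac:(lra) ltac:(lra)). fold c in H0.
  assert (Hc : 0 <= c <= 1) by (unfold c; lra).
  assert (Hbr : (1 - c) * c ^ m <= ((1 - a) * b ^ m + (1 - b) * a ^ m) / 2).
  { assert (ID : ((1 - a) * b ^ m + (1 - b) * a ^ m) / 2 - (1 - c) * c ^ m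
       = ((1 - c) * (a ^ m + b ^ m - 2 * c ^ m) + (a - b) * (a ^ m - b ^ m) / 2) / 2).
    { unfold c. field. }
    assert (0 <= (1 - c) * (a ^ m + b ^ m - 2 * c ^ m)) by (apply Rmult_le_pos; lra).
    lra. }
  nra.
Qed.

Theorem corollaryB4 (p1 p2 : R) (q : nat -> R)
  (hp1 : 0 < p1) (hp12 : p1 <= p2) (hp2 : p2 <= 1)
  (hq : is_pmf q) (j : nat) (hj : (1 <= j)%nat) :
  tail_gt (conv (conv q (geom_pmf p1)) (geom_pmf p2)) j
  >= tail_gt (conv (conv q (geom_pmf ((p1 + p2) / 2)))
                   (geom_pmf ((p1 + p2) / 2))) j.
Proof.
  destruct hq as [hq _]. unfold tail_gt. apply Rle_ge.
  apply Rplus_le_compat_l, Ropp_le_contravar.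
  rewrite !Sconv2. apply sum_Rle; intros l Hl.
  apply Rmult_le_compat_l; [apply hq|].
  rewrite !Sconv_geom.
  replace (1 - (p1 + p2) / 2) with (((1 - p1) + (1 - p2)) / 2) by field.
  pose proof (Tmono (1 - p1) (1 - p2) (j - l) ltac:(lra) ltac:(lra)). lra.
Qed.
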